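(* Let $M/K$ be a finite Galois extension inside $\bar K$. Then $M/K$ is obtained by nontrivial strong cluster magnification from some subextension $L/K$ if and only if ${\rm Gal}(M/K)\cong A\times B$ for nontrivial groups $A$ and $B$ with $|A|>2$. If this happens, then $L/K$ is also Galois.
   Context: $K$ is a perfect field with a fixed algebraic closure $\bar K$; all extensions are finite and contained in $\bar K$. For a finite extension $L/K$, $\tilde L$ denotes its Galois closure in $\bar K$. Definition: $M/K$ is obtained by strong cluster magnification from a subextension $L/K$ (with $K\subseteq L\subseteq M$) if $[L:K]>2$, and there is a finite Galois extension $F/K$ with $\tilde L$ and $F$ linearly disjoint over $K$ and $LF=M$. The magnification is nontrivial if $F\neq K$. *)

(* Defs.v *)
From HB Require Import structures.
From mathcomp Require Import all_boot all_order all_algebra all_fingroup all_solvable all_field.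
Set Implicit Arguments. Unset Strict Implicit. Unset Printing Implicit Defensive.
Import GRing.Theory.
Local Open Scope ring_scope.

(* Setting: the base field K is the field [K : fieldType]; the finite Galois
   extension M/K is the ambient [M : splittingFieldType K] with [galois 1 {:M}].
   All subextensions of M/K are the subfields [{subfield M}]; the base field K
   corresponds to [1%AS].  Degrees over K are [\dim]. *)

Section Defs.
Variables (K : fieldType) (M : splittingFieldType K).

(* Galois closure of L over K inside M (M is normal over K, so this is the
   Galois closure in the algebraic closure): the compositum of all
   K-conjugates s(L), s in Gal(M/K). *)
Definition galois_closure (L : {subfield M}) : {subfield M} :=
  <<(\sum_(s in 'Gal({:M} / 1%AS)%g) (s @: L))%VS>>%AS.

Definition lin_disjoint (U V : {vspace M}) : Prop :=
  forall (s c : seq M),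
    all (fun x => x \in U) s -> free s ->
    size c = size s -> all (fun x => x \in V) c ->
    \sum_(i < size s) c`_i * s`_i = 0 -> all (fun x => x == 0) c.

Definition strong_cluster_magnification (L : {subfield M}) : Prop :=
  (2 < \dim L)%N /\
  exists F : {subfield M},
    galois 1%AS F /\ lin_disjoint (galois_closure L) F /\ (L * F)%AS = {:M}%AS.

Definition nontrivial_scm (L : {subfield M}) : Prop :=
  (2 < \dim L)%N /\
  exists F : {subfield M},
    galois 1%AS F /\ lin_disjoint (galois_closure L) F /\ (L * F)%AS = {:M}%AS
    /\ F != 1%AS.

End Defs.

(* Main.v *)
Require Import Defs.
From HB Require Import structures.
From mathcomp Require Import all_boot all_order all_algebra all_fingroup all_solvable all_field.
From mathcomp Require Import zify.
Set Implicit Arguments. Unset Strict Implicit. Unset Printing Implicit Defensive.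
Import GRing.Theory.
Local Open Scope ring_scope.

Section Aux.
Variables (K : fieldType) (M : splittingFieldType K).

Lemma lindisj_cap (U V : {subfield M}) :
  lin_disjoint U V -> (U :&: V)%VS = 1%VS.
Proof.
move=> LD; apply/eqP; rewrite eqEsubv subv_cap !sub1v andbT andbT.
apply/subvP=> x /memv_capP[Ux Vx]; apply/negPn/negP=> nx.
have := LD [:: x; 1] [:: -1; x].
rewrite /= Ux mem1v Vx rpredN mem1v /= => /(_ isT).
rewrite free_cons span_seq1 seq1_free oner_neq0 nx => /(_ isT erefl).
move=> /(_ isT); rewrite big_ord_recr big_ord_recr big_ord0 /= add0r mulN1r mulr1 addNr.
by rewrite eqr_oppLR oppr0 oner_eq0 => /(_ erefl).
Qed.

Lemma dimprod_lindisj (E F : {subfield M}) :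
  \dim (E * F) = (\dim E * \dim F)%N -> lin_disjoint E F.
Proof.
move=> dEF s c sE fs szc cF Hsum.
apply/(all_nthP 0) => k hk /=; rewrite szc in hk.
case: (eqVneq c`_k 0) => // nzk; exfalso.
set n := size s in hk Hsum.
have cFi i : (i < n)%N -> c`_i \in F by move=> hi; apply: (all_nthP 0 cF); rewrite szc.
pose k' : 'I_n := Ordinal hk.
pose T := (\sum_(i < n | i != k') <[s`_i]>)%VS.
have spanE : (<<s>> = <[s`_k']> + T)%VS.
  by rewrite span_def (big_nth 0) big_mkord (bigD1 k').
have skT : s`_k' \in (T * F)%VS.
  have -> : s`_k' = \sum_(i < n | i != k') s`_i * (- (c`_i / c`_k')).
    rewrite (bigD1 k') //= in Hsum.
    have e : \sum_(i < n | i != k') c`_i * s`_i = - (c`_k' * s`_k').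
      by apply/eqP; rewrite -addr_eq0 addrC Hsum.
    transitivity (- (\sum_(i < n | i != k') c`_i * s`_i) / c`_k').
      by rewrite e opprK mulrC mulKf.
    rewrite mulNr big_distrl -sumrN; apply: eq_bigr => i _ /=.
    by rewrite mulrN mulrA [s`_i * _]mulrC.
  apply: rpred_sum => i hi; apply: memv_mul.
    exact: (subvP (sumv_sup i hi (subvv _))) _ (memv_line _).
  by rewrite rpredN rpred_div // cFi.
have SF : (<<s>> * F = T * F)%VS.
  apply/eqP; rewrite eqEsubv spanE prodvDl subv_add subvv andbT addvSr andbT.
  apply: subv_trans (prodvSl F (_ : <[s`_k']> <= T * F)%VS) _.
    by rewrite -memvE.
  by rewrite -prodvA prodv_id.
have dT : (\dim T < n)%N.
  apply: leq_ltn_trans (dimv_leq_sum _ _ _) _.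
  have h1 : (\sum_(i < n) 1 = n)%N by rewrite sum1_card card_ord.
  rewrite -[X in (_ < X)%N]h1 [X in (_ < X)%N](bigD1 k') //= add1n ltnS.
  by apply: leq_sum => i _; rewrite dim_vline leq_b1.
have dS : \dim <<s>> = n by apply/eqP: fs.
have sSE : (<<s>> <= E)%VS by apply/span_subvP => x /(allP sE).
have dEd : (\dim (E :\: <<s>>) + n = \dim E)%N.
  by rewrite -dS -(dimv_cap_compl E <<s>>) (capv_idPr sSE) addnC.
have EF : (E * F = (E :\: <<s>>) * F + <<s>> * F)%VS.
  by rewrite -prodvDl addv_diff (addv_idPl sSE).
have : (\dim (E * F) <= \dim (E :\: <<s>>) * \dim F + \dim T * \dim F)%N.
  rewrite EF; apply: leq_trans (dimv_add_leqif _ _).1 _.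
  by apply: leq_add; [apply: dim_prodv | rewrite SF dim_prodv].
have dF := adim_gt0 F.
rewrite dEF -dEd; move: dT; set a := \dim (E :\: <<s>>); set t := \dim T; set f := \dim F.
nia.
Qed.

Hypothesis HM : galois 1%AS {:M}%AS.

Lemma galE_dim (E : {subfield M}) :
  (\dim {:M} = #|'Gal({:M} / E)%g| * \dim E)%N.
Proof.
rewrite -galois_dim; first exact: (dim_sup_field (subvf E)).
by apply: galoisS HM; rewrite sub1v subvf.
Qed.

Lemma gal_prod (E F : {subfield M}) :
  'Gal({:M} / (E * F)%AS)%g = ('Gal({:M} / E) :&: 'Gal({:M} / F))%g.
Proof.
apply/eqP; rewrite eqEsubset subsetI !galS ?field_subvMr ?field_subvMl //=.
pose H := setI_group 'Gal({:M} / E) 'Gal({:M} / F).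
have -> : ('Gal({:M} / E) :&: 'Gal({:M} / F))%g = 'Gal({:M} / fixedField H)%g.
  by rewrite gal_fixedField.
rewrite galS //.
apply: prodv_sub.
  by rewrite -(galois_connection _ (subvf E)) subsetIl.
by rewrite -(galois_connection _ (subvf F)) subsetIr.
Qed.

Lemma fixed_gal_eq (E : {subfield M}) : fixedField 'Gal({:M} / E)%g = E.
Proof.
apply/galois_fixedField; apply: galoisS HM; by rewrite sub1v subvf.
Qed.

Lemma galjoin (E F : {subfield M}) : galois 1 F -> (E :&: F)%VS = 1%VS ->
  ('Gal({:M} / E) * 'Gal({:M} / F))%g = 'Gal({:M} / 1%AS)%g.
Proof.
move=> gF EF1.
have nF : ('Gal({:M} / F) <| 'Gal({:M} / 1%AS))%g.
  have s1 : (1%AS <= F <= {:M}%AS)%VS by rewrite sub1v subvf.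
  case/and3P: gF => _ _ nF.
  exact: (normalField_normal s1 nF).
rewrite -norm_joinEl; last first.
  exact: subset_trans (galS _ (sub1v E)) (normal_norm nF).
rewrite /joing -gal_generated; congr 'Gal(_ / _)%g.
apply/eqP; rewrite /= eqEsubv sub1v andbT -EF1 subv_cap.
rewrite -{2}(fixed_gal_eq E) -{3}(fixed_gal_eq F).
by rewrite !fixedFieldS ?subsetUl ?subsetUr.
Qed.

Lemma dim_comp (E F : {subfield M}) : galois 1 F -> (E :&: F)%VS = 1%VS ->
  \dim (E * F) = (\dim E * \dim F)%N.
Proof.
move=> gF EF1.
have := mul_cardG 'Gal({:M} / E) 'Gal({:M} / F).
rewrite galjoin // -gal_prod.
have := galE_dim 1%AS; rewrite dimv1 muln1 => <-.
have := galE_dim E; have := galE_dim F; have := galE_dim (E * F)%AS.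
have := adim_gt0 {:M}%AS.
set D := \dim _; set nE := #|_|; set nF := #|_|; set n := #|_|.
set dE := \dim E; set dF := \dim F; set dEF := \dim _.
move=> D0 h1 h2 h3 h4.
have n0 : (0 < D * nE)%N by rewrite muln_gt0 D0 cardG_gt0.
apply/eqP; rewrite -(eqn_pmul2l n0); apply/eqP.
have -> : (D * nE * dEF = D * D)%N by rewrite -mulnA -h1.
have -> : (D * nE * (dE * dF) = (n * dE) * (nF * dF))%N.
  by rewrite -h4; nia.
by rewrite -h2 -h3.
Qed.

Lemma gc_img (L : {subfield M}) s : s \in 'Gal({:M} / 1%AS)%g ->
  (s @: L <= galois_closure L)%VS.
Proof.
move=> Gs; rewrite /galois_closure /=.
apply: subv_trans (sub_agenv _); exact: (sumv_sup s).
Qed.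

Lemma gc_sub (L : {subfield M}) : (L <= galois_closure L)%VS.
Proof.
apply/subvP => a La; rewrite -(gal_id {:M}%AS a).
by apply: (subvP (gc_img L (group1 _))); apply: memv_img.
Qed.

Lemma normal_img (L : {subfield M}) : galois 1 L ->
  forall s, s \in 'Gal({:M} / 1%AS)%g -> (s @: L <= L)%VS.
Proof.
move=> gL s Gs; have : kAut 1 {:M} s by rewrite -gal_kAut ?subvf.
have s1 : (1%AS <= L <= {:M}%AS)%VS by rewrite sub1v subvf.
case/and3P: gL => _ _ nL.
by move/(normalField_kAut s1 nL); rewrite kAutE => /andP[_ ->].
Qed.

Lemma gc_normal (L : {subfield M}) : galois 1 L ->
  (galois_closure L : {vspace M}) = L.
Proof.
move=> gL; apply/eqP; rewrite eqEsubv gc_sub andbT /galois_closure /=.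
rewrite -[X in (_ <= X)%VS](subfield_closed L) agenvS //.
by apply/subv_sumP => s Gs; apply: normal_img.
Qed.

Lemma img_normal (L : {subfield M}) :
  (forall s, s \in 'Gal({:M} / 1%AS)%g -> (s @: L <= L)%VS) -> galois 1 L.
Proof.
move=> hL; apply: (normalField_galois HM); first by rewrite sub1v subvf.
apply/forall_inP => f; rewrite inE => /kAut_to_gal [x Gx fx].
rewrite (@eq_in_limg _ _ _ L f x); last by move=> a _; apply: fx (memvf a).
rewrite eqEdim hL //= limg_dim_eq ?(eqP (AEnd_lker0 _)) ?capv0 //.
Qed.

Lemma scm_core (L F : {subfield M}) : galois 1 F ->
  lin_disjoint (galois_closure L) F -> (L * F)%AS = {:M}%AS ->
  [/\ galois 1 L, (L :&: F)%VS = 1%VS & \dim {:M} = (\dim L * \dim F)%N].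
Proof.
move=> gF LD LF.
have cap := lindisj_cap LD.
have LF1 : (L :&: F)%VS = 1%VS.
  apply/eqP; rewrite eqEsubv subv_cap !sub1v !andbT -cap.
  by rewrite capvS ?gc_sub.
have d1 := dim_comp gF cap; have d2 := dim_comp gF LF1.
have LFv : (L * F)%VS = fullv by have := congr1 val LF.
have dle : (\dim (galois_closure L) <= \dim L)%N.
  rewrite -(leq_pmul2r (adim_gt0 F)) -d1 -d2 LFv; exact: dimvS (subvf _).
have eqL : (L : {vspace M}) = galois_closure L.
  by apply/eqP; rewrite eqEdim gc_sub dle.
split => //; last by rewrite -LFv d2.
by apply: img_normal => s Gs; rewrite {2}eqL; apply: gc_img.
Qed.
End Aux.

Theorem corollary4p8 (K : fieldType) (M : splittingFieldType K)
    (HM : galois 1%AS {:M}%AS) :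
  ((exists L : {subfield M}, nontrivial_scm L) <->
   (exists (aT bT : finGroupType) (A : {group aT}) (B : {group bT}),
      (2 < #|A|)%N /\ (1 < #|B|)%N /\ ('Gal({:M}%AS / 1%AS) \isog setX A B)%g))
  /\ (forall L : {subfield M}, nontrivial_scm L -> galois 1%AS L).
Proof.
split; last first.
  by move=> L [_ [F [gF [LD [LF _]]]]]; case: (scm_core HM gF LD LF).
split.
  move=> [L [d2 [F [gF [LD [LF nF1]]]]]].
  have [gL LF1 dM] := scm_core HM gF LD LF.
  set G := 'Gal({:M} / 1%AS)%G.
  set NL := 'Gal({:M} / L)%G; set NF := 'Gal({:M} / F)%G.
  have s1L : (1%AS <= L <= {:M}%AS)%VS by rewrite sub1v subvf.
  have s1F : (1%AS <= F <= {:M}%AS)%VS by rewrite sub1v subvf.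
  have nL : (NL <| G)%g by case/and3P: gL => _ _ nL; exact: normalField_normal s1L nL.
  have nF : (NF <| G)%g by case/and3P: gF => _ _ nF; exact: normalField_normal s1F nF.
  have jn : (NL * NF)%g = G := galjoin HM gF LF1.
  have tr : (NL :&: NF)%g = 1%g.
    rewrite -gal_prod LF; apply/eqP; rewrite trivg_card1.
    have := galE_dim HM {:M}%AS; have := adim_gt0 {:M}%AS.
    set x := #|_|; set d := \dim _ => hd h.
    apply/eqP; nia.
  have cNLNF : (NF \subset 'C(NL))%g.
    apply/commG1P; apply/trivgP; rewrite -tr setIC.
    apply: commg_subI; rewrite subsetI subxx /=.
      exact: subset_trans (normal_sub nF) (normal_norm nL).
    exact: subset_trans (normal_sub nL) (normal_norm nF).
  have dp : (NL \x NF)%g = G by rewrite dprodE.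
  have cNF : #|NF| = \dim L.
    have := galE_dim HM F; rewrite dM => h.
    apply/eqP; rewrite -(eqn_pmul2r (adim_gt0 F)) h //.
  have cNL : #|NL| = \dim F.
    have := galE_dim HM L; rewrite dM mulnC => h.
    apply/eqP; rewrite -(eqn_pmul2r (adim_gt0 L)) -h //.
  exists (gal_of {:M}), (gal_of {:M}), NF, NL.
  split; first by rewrite cNF.
  split.
    rewrite cNL ltnNge; apply/negP => hF; apply/negP: nF1; rewrite negbK.
    apply/eqP/val_inj => /=; apply/eqP; rewrite eq_sym eqEdim sub1v dimv1 hF.
    done.
  have dp' : (NF \x NL)%g = G by rewrite dprodC.
  apply: (isog_dprod dp' (setX_dprod NF NL)).
    exact: isog_setX1.
  exact: isog_set1X.
move=> [aT [bT [A [B [hA [hB iso]]]]]].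
set G := 'Gal({:M} / 1%AS)%G.
have /isogP [f injf imf] := isog_symr iso.
have sA : (setX A 1 \subset setX A B)%g by rewrite setXS ?sub1G.
have sB : (setX 1 B \subset setX A B)%g by rewrite setXS ?sub1G.
pose H1 := (f @* setX A 1)%G; pose H2 := (f @* setX 1 B)%G.
have dp : (H1 \x H2)%g = G.
  by rewrite /= -imf; apply: injm_dprod => //; exact: setX_dprod.
have [nH1 nH2] := dprod_normal2 dp.
have /dprodP [_ jn _ tr] := dp.
have c1 : #|H1| = #|A| by rewrite card_injm // cardsX cards1 muln1.
have c2 : #|H2| = #|B| by rewrite card_injm // cardsX cards1 mul1n.
pose L := fixedField_aspace H2; pose F := fixedField_aspace H1.
have gL2 : 'Gal({:M} / L)%g = H2 by rewrite gal_fixedField.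
have gF1 : 'Gal({:M} / F)%g = H1 by rewrite gal_fixedField.
have gL : galois 1 L := normal_fixedField_galois HM nH2.
have gF : galois 1 F := normal_fixedField_galois HM nH1.
have cG : #|G| = \dim {:M}.
  by have := galE_dim HM 1%AS; rewrite dimv1 muln1.
have cG2 : #|G| = (#|H1| * #|H2|)%N.
  by rewrite -jn mul_cardG tr cards1 muln1.
have dL : \dim L = #|A|.
  have := galE_dim HM L; rewrite gL2 -cG cG2 mulnC => /eqP.
  by rewrite eqn_pmul2l ?cardG_gt0 // c1 => /eqP.
have dF : \dim F = #|B|.
  have := galE_dim HM F; rewrite gF1 -cG cG2 => /eqP.
  by rewrite eqn_pmul2l ?cardG_gt0 // c2 => /eqP.
have LF1 : (L :&: F)%VS = 1%VS.
  apply/eqP; rewrite eqEsubv subv_cap !sub1v !andbT.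
  rewrite -[X in (_ <= X)%VS](fixed_gal_eq HM 1%AS) -/G -jn.
  apply/subvP => a /memv_capP [La Fa].
  have [Ma fL] := mem_fixedFieldP La; have [_ fF] := mem_fixedFieldP Fa.
  apply/fixedFieldP => // x /mulsgP [y z y1 z2 ->].
  by rewrite galM // fF // fL.
have LF : (L * F)%AS = {:M}%AS.
  apply/val_inj/eqP; rewrite /= eqEdim subvf /=.
  have := galE_dim HM (L * F)%AS; rewrite gal_prod // gL2 gF1 setIC tr cards1 mul1n.
  by move=> ->.
exists L; split; first by rewrite dL.
exists F; split => //; split.
  by rewrite gc_normal //; apply: dimprod_lindisj; apply: dim_comp.
split => //; apply/negP => /eqP F1.
by move: hB; rewrite -dF F1 dimv1.
Qed.
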